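(* Let $N\ge2$, let $G$ be a connected undirected graph with $N$ vertices, and let $L$ be its Laplacian. For $0<\gamma\le\lambda_2(L)$ define \[ \Gamma_\infty(\gamma):=\sup_{t\ge0}\|e^{\gamma t}(e^{-Lt}-\mathbf{1}\bar{\mathbf{1}})\|_\infty. \] Then: (a) for all $0<\gamma\le\lambda_2(L)$, $2-\frac2N\le\Gamma_\infty(\gamma)\le N-1$; (b) if $G$ is a complete graph, then $\lambda_2(L)=N$ and $\Gamma_\infty(\gamma)=2-\frac2N$ for all $0<\gamma\le N$.
   Context: $\mathbf{1}=(1,\dots,1)^\top\in\mathbb{R}^N$, $\bar{\mathbf{1}}=\frac1N\mathbf{1}^\top$; $\|\cdot\|_\infty$ is the matrix norm induced by the maximum norm (maximum absolute row sum); $\lambda_2(L)$ is the second smallest eigenvalue of $L$. *)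

(* Defs.v *)
From HB Require Import structures.
From mathcomp Require Import all_boot all_order all_algebra.
From mathcomp Require Import all_classical all_reals all_analysis.
Set Implicit Arguments. Unset Strict Implicit. Unset Printing Implicit Defensive.
Import Order.TTheory GRing.Theory Num.Theory numFieldNormedType.Exports.
Local Open Scope ring_scope.
Local Open Scope classical_set_scope.

Definition simple_graph (N : nat) (e : rel 'I_N) : Prop :=
  (forall i j, e i j = e j i) /\ (forall i, ~~ e i i).

Definition connected_graph (N : nat) (e : rel 'I_N) : Prop :=
  forall i j, connect e i j.

Definition complete_graph (N : nat) (e : rel 'I_N) : Prop :=
  forall i j, i != j -> e i j.

Definition laplacian (R : pzRingType) (N : nat) (e : rel 'I_N) : 'M[R]_N :=
  \matrix_(i, j) (if i == j then (#|[set k | e i k]|)%:R else - ((e i j)%:R)).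

Definition expm (R : realType) (n : nat) (A : 'M[R]_n) : 'M[R]_n :=
  \matrix_(i, j) limn (fun k : nat => (\sum_(l < k) (l`!%:R)^-1 *: A ^+ l) i j).

(* Induced infinity norm: maximum absolute row sum. *)
Definition norm_inf (R : realType) (m n : nat) (A : 'M[R]_(m, n)) : R :=
  \big[Num.max/0]_(i < m) \sum_(j < n) `|A i j|.

(* 1 * 1bar = the N x N matrix with all entries 1/N. *)
Definition avg_mx (R : realType) (N : nat) : 'M[R]_N := const_mx (N%:R)^-1.

Definition Gamma_inf (R : realType) (N : nat) (L : 'M[R]_N) (gamma : R) : \bar R :=
  ereal_sup [set (norm_inf (expR (gamma * t) *: (expm (- (t *: L)) - avg_mx R N)))%:E
            | t in [set t : R | 0 <= t]].

Definition is_lambda2 (R : realType) (N : nat) (M : 'M[R]_N) (l : R) : Prop :=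
  exists s : seq R,
    [/\ size s = N, sorted <=%R s,
        char_poly M = \prod_(a <- s) ('X - a%:P) & nth 0 s 1 = l].

(* Main.v *)
Require Import Defs.
From HB Require Import structures.
From mathcomp Require Import all_boot all_order all_algebra.
From mathcomp Require Import all_classical all_reals all_analysis.
From mathcomp Require Import complex.
From mathcomp Require Import ring lra.
Set Implicit Arguments. Unset Strict Implicit. Unset Printing Implicit Defensive.
Import Order.TTheory GRing.Theory Num.Theory numFieldNormedType.Exports.
Local Open Scope ring_scope.
Section T. Local Open Scope classical_set_scope.
Variable R : realType.
Lemma exp_series (x : R) :
  (fun k => \sum_(l < k) (l`!%:R)^-1 * x ^+ l) @ \oo --> expR x.
Proof.
have -> : (fun k => \sum_(l < k) (l`!%:R)^-1 * x ^+ l) = series (exp_coeff x).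
  apply/funext => k; rewrite /series /= big_mkord; apply: eq_bigr => l _.
  by rewrite /exp_coeff /= mulrC.
exact: is_cvg_series_exp_coeff.
Qed.

Lemma cvg_bigsum (I : Type) (s : seq I) (F : I -> nat -> R) (l : I -> R) :
  (forall m, F m @ \oo --> l m) ->
  (fun k => \sum_(m <- s) F m k) @ \oo --> \sum_(m <- s) l m.
Proof.
move=> H; elim: s => [|a s IH].
  rewrite big_nil; under eq_fun do rewrite big_nil; exact: cvg_cst.
rewrite big_cons; under eq_fun do rewrite big_cons; exact: cvgD.
Qed.
End T.
Lemma mx_exprZ (R : comPzRingType) n (a : R) (A : 'M[R]_n) k : (a *: A) ^+ k = a ^+ k *: A ^+ k.
Proof.
elim: k => [|k IH]; first by rewrite !expr0 scale1r.
by rewrite !exprSr IH -!mulmxE -scalemxAl -scalemxAr scalerA.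
Qed.
Lemma char_poly_conj (F : fieldType) n (A V : 'M[F]_n) : V \in unitmx ->
  char_poly (invmx V *m A *m V) = char_poly A.
Proof.
move=> Vu.
have E : char_poly_mx (invmx V *m A *m V) =
  map_mx polyC (invmx V) *m char_poly_mx A *m map_mx polyC V.
  rewrite /char_poly_mx mulmxBr mulmxBl -!map_mxM.
  have H : map_mx polyC (invmx V) *m 'X%:M *m map_mx polyC V = 'X%:M.
    by rewrite -mulmxA -scalar_mxC mulmxA -map_mxM mulVmx // map_mx1 mul1mx.
  by rewrite H.
rewrite /char_poly E !det_mulmx mulrAC -det_mulmx -map_mxM mulVmx //.
by rewrite map_mx1 det1 mul1r.
Qed.

Section Spec.
Local Open Scope sesquilinear_scope.
Variable R : realType.
Local Notation C := R[i].
Local Notation toC := (real_complex R).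
Variables (N : nat) (L : 'M[R]_N).
Hypothesis Lsym : L^T = L.

Definition Lc : 'M[C]_N := map_mx toC L.
Definition P := spectralmx Lc.
Definition dd := spectral_diag Lc.

Lemma Lc_herm : Lc \is hermsymmx.
Proof.
apply: realsym_hermsym.
  apply/is_hermitianmxP; rewrite expr0 scale1r.
  apply/matrixP => i j; rewrite !mxE /=.
  by rewrite -[in LHS]Lsym mxE.
apply/mxOverP => i j; rewrite mxE realE !lecE /= eqxx /= -realE; exact: num_real.
Qed.

Lemma P_unitary : P \is unitarymx.
Proof. exact: spectral_unitarymx. Qed.

Lemma Lc_eq : Lc = P^t* *m diag_mx dd *m P.
Proof.
rewrite -invmx_unitary; last exact: P_unitary.
by apply/orthomx_spectralP/hermitian_normalmx/Lc_herm.
Qed.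

Lemma PPt : P *m P^t* = 1%:M.
Proof. exact/unitarymxP/P_unitary. Qed.

Lemma PtP : P^t* *m P = 1%:M.
Proof.
have U := unitarymx_unit P_unitary.
by rewrite -invmx_unitary ?P_unitary // mulVmx.
Qed.

Lemma dd_real m : dd 0 m \is Num.real.
Proof. by have /mxOverP := hermitian_spectral_diag_real Lc_herm; apply. Qed.

Definition r (m : 'I_N) : R := complex.Re (dd 0 m).
Lemma ddE m : dd 0 m = toC (r m).
Proof. by rewrite /r RRe_real // dd_real. Qed.

End Spec.
Section Spec2.
Local Open Scope sesquilinear_scope.
Variable R : realType.
Local Notation C := R[i].
Local Notation toC := (real_complex R).
Variables (N : nat) (L : 'M[R]_N).
Hypothesis Lsym : L^T = L.
Local Notation P := (P L).
Local Notation dd := (dd L).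
Local Notation r := (r L).
Local Notation Lc := (Lc L).

Lemma conj_diag_entry (v : 'rV[C]_N) i j :
  (P^t* *m diag_mx v *m P) i j = \sum_m Num.conj (P m i) * v 0 m * P m j.
Proof.
rewrite mxE; apply: eq_bigr => m _; rewrite mul_mx_diag !mxE //.
Qed.

Lemma Lc_pow k : Lc ^+ k = P^t* *m diag_mx (\row_m (dd 0 m ^+ k)) *m P.
Proof.
elim: k => [|k IH].
  rewrite (_ : diag_mx _ = 1%:M); last first.
    by apply/matrixP => i j; rewrite !mxE expr0.
  by rewrite mulmx1 PtP.
rewrite exprSr IH -mulmxE.
have E := Lc_eq Lsym.
rewrite [X in _ *m X = _]E.
rewrite !mulmxA (mulmxtVK _ (P_unitary L)) -[_ *m diag_mx dd]mulmxA mulmx_diag.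
congr (_ *m diag_mx _ *m _).
by apply/rowP => m; rewrite !mxE exprSr.
Qed.

Definition w m (i j : 'I_N) : R := complex.Re (Num.conj (P m i) * P m j).

Lemma Lpow_entry k i j : (L ^+ k) i j = \sum_m w m i j * r m ^+ k.
Proof.
have : toC ((L ^+ k) i j) = (Lc ^+ k) i j.
  by rewrite /Lc -rmorphXn mxE.
rewrite Lc_pow conj_diag_entry => /(congr1 (@complex.Re R)) /= ->.
rewrite raddf_sum; apply: eq_bigr => m _ /=.
rewrite mxE ddE // -rmorphXn mulrAC /w.
by case: (Num.conj (P m i) * P m j) => a b /=; rewrite !mulr0 subr0.
Qed.

Lemma partial_entry (t : R) k i j :
  (\sum_(l < k) (l`!%:R)^-1 *: (- (t *: L)) ^+ l) i j =
  \sum_m w m i j * \sum_(l < k) (l`!%:R)^-1 * (- t * r m) ^+ l.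
Proof.
rewrite summxE.
under eq_bigr => l _ do rewrite -scaleNr mx_exprZ !mxE Lpow_entry mulrA big_distrr.
rewrite exchange_big /=; apply: eq_bigr => m _.
rewrite big_distrr /=; apply: eq_bigr => l _.
rewrite exprMn /=; ring.
Qed.

Lemma expm_entry (t : R) i j :
  expm (- (t *: L)) i j = \sum_m w m i j * expR (- t * r m).
Proof.
rewrite mxE; apply: cvg_lim; first exact: Rhausdorff.
under eq_fun do rewrite partial_entry.
apply: cvg_bigsum => m; apply: cvgMr; exact: exp_series.
Qed.

Lemma Re_conjM (z1 z2 : C) :
  complex.Re (Num.conj z1 * z2) = complex.Re z1 * complex.Re z2 + complex.Im z1 * complex.Im z2.
Proof. by case: z1 z2 => a b [c d] /=; ring. Qed.

Lemma w_sum i j : \sum_m w m i j = (i == j)%:R.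
Proof.
transitivity (complex.Re ((P^t* *m P) i j)).
  rewrite mxE raddf_sum; apply: eq_bigr => m _; by rewrite !mxE.
by rewrite PtP mxE; case: (i == j).
Qed.

Lemma w_row m : \sum_j w m j j = 1.
Proof.
transitivity (complex.Re ((P *m P^t*) m m)).
  rewrite mxE raddf_sum; apply: eq_bigr => j _; by rewrite /w !mxE mulrC.
by rewrite PPt mxE eqxx.
Qed.

Lemma w_ge0 m i : 0 <= w m i i.
Proof.
rewrite /w Re_conjM; set a := complex.Re _; set b := complex.Im _.
have := sqr_ge0 a; have := sqr_ge0 b; nra.
Qed.

Lemma w_le m i j : `|w m i j| <= (w m i i + w m j j) / 2.
Proof.
rewrite /w !Re_conjM.
set a := complex.Re (P m i); set b := complex.Im (P m i).
set c := complex.Re (P m j); set d := complex.Im (P m j).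
have h1 := sqr_ge0 (a - c); have h2 := sqr_ge0 (b - d).
have h3 := sqr_ge0 (a + c); have h4 := sqr_ge0 (b + d).
rewrite ler_norml; apply/andP; split; nra.
Qed.

Lemma char_Lc : char_poly Lc = \prod_m ('X - (dd 0 m)%:P).
Proof.
rewrite {1}(Lc_eq Lsym) -invmx_unitary ?P_unitary //.
rewrite char_poly_conj ?unitarymx_unit ?P_unitary //.
rewrite char_poly_trig ?diag_mx_is_trig //.
by apply: eq_bigr => m _; rewrite mxE eqxx mulr1n.
Qed.

Lemma char_L : char_poly L = \prod_m ('X - (r m)%:P).
Proof.
apply: (@map_poly_inj _ _ (real_complex R)).
rewrite map_char_poly -/Lc char_Lc rmorph_prod.
by apply: eq_bigr => m _ /=; rewrite map_polyXsubC ddE.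
Qed.

Lemma expm_mx (t : R) :
  expm (- (t *: L)) = \matrix_(i, j) \sum_m w m i j * expR (- t * r m).
Proof. by apply/matrixP => i j; rewrite expm_entry mxE. Qed.
End Spec2.

Section Kernel.
Local Open Scope sesquilinear_scope.
Variable R : realType.
Local Notation C := R[i].
Local Notation toC := (real_complex R).
Variables (N : nat) (L : 'M[R]_N).
Hypothesis Lsym : L^T = L.
Hypothesis Lrow : forall i, \sum_j L i j = 0.
Hypothesis N_gt0 : (0 < N)%N.
Local Notation P := (P L).
Local Notation dd := (dd L).
Local Notation r := (r L).
Local Notation w := (w L).
Local Notation Lc := (Lc L).

Definition vv m := \sum_j P m j.

Lemma vv_zero m : r m != 0 -> vv m = 0.
Proof.
move=> rm0.
have E : P *m Lc = diag_mx dd *m P.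
  by rewrite {1}(Lc_eq Lsym) !mulmxA PPt mul1mx.
have : \sum_j (P *m Lc) m j = \sum_j (diag_mx dd *m P) m j by rewrite E.
rewrite mul_diag_mx.
under eq_bigr do rewrite mxE.
rewrite exchange_big /= big1; last first.
  move=> k _; rewrite -mulr_sumr.
  under eq_bigr do rewrite mxE.
  by rewrite -rmorph_sum /= Lrow mulr0.
under [in X in _ = X -> _]eq_bigr do rewrite mxE.
rewrite -mulr_sumr ddE // => /esym /eqP; rewrite mulf_eq0 => /orP [|/eqP //].
move=> /eqP /(congr1 (@complex.Re R)) /= h.
by move/eqP: rm0.
Qed.

Lemma vv_sum i : \sum_m Num.conj (P m i) * vv m = 1.
Proof.
transitivity (\sum_j (P^t* *m P) i j).
  under eq_bigr do rewrite mulr_sumr.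
  rewrite exchange_big /=; apply: eq_bigr => j _; rewrite mxE.
  by apply: eq_bigr => m _; rewrite !mxE.
rewrite PtP (bigD1 i) //= big1 ?addr0; first by rewrite mxE eqxx.
by move=> j /negbTE ji; rewrite mxE eq_sym ji.
Qed.

Lemma exists_zero : exists m0, r m0 = 0.
Proof.
apply/not_existsP => H.
have := vv_sum (Ordinal N_gt0); rewrite big1 ?oner_eq0 //.
  by move=> /esym/eqP; rewrite oner_eq0.
by move=> m _; rewrite vv_zero ?mulr0 //; apply/eqP/H.
Qed.

Hypothesis Huniq : forall m m', r m = 0 -> r m' = 0 -> m = m'.

Lemma kernel_w : exists m0, r m0 = 0 /\ forall i j, w m0 i j = N%:R^-1.
Proof.
have [m0 rm0] := exists_zero.
exists m0; split => //.
have Hi i : Num.conj (P m0 i) * vv m0 = 1.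
  rewrite -(vv_sum i) (bigD1 m0) //= big1 ?addr0 //.
  move=> m mm0; rewrite vv_zero ?mulr0 //; apply/eqP => rm.
  by move/eqP: mm0; apply; apply: Huniq.
have Peq i j : P m0 i = P m0 j.
  have v0 : vv m0 != 0.
    by apply/eqP => v0; have := Hi i; rewrite v0 mulr0 => /eqP; rewrite eq_sym oner_eq0.
  have : Num.conj (P m0 i) = Num.conj (P m0 j).
    by rewrite -[LHS](mulfK v0) -[RHS](mulfK v0) Hi Hi.
  by move/(congr1 Num.conj); rewrite !conjCK.
have wc i j : w m0 i j = w m0 (Ordinal N_gt0) (Ordinal N_gt0).
  by rewrite /w (Peq i (Ordinal N_gt0)) (Peq j (Ordinal N_gt0)).
move=> i j; rewrite wc.
have := w_row L m0; under eq_bigr do rewrite wc.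
rewrite sumr_const card_ord => H.
have n0 : (N%:R : R) != 0 by rewrite pnatr_eq0 -lt0n.
by apply: (mulfI n0); rewrite mulfV // -[RHS]H mulr_natl.
Qed.
End Kernel.

Section Norm.
Variable R : realType.
Lemma norm_inf_ub N (A : 'M[R]_N) c :
  (forall i, \sum_j `|A i j| <= c) -> 0 <= c -> norm_inf A <= c.
Proof.
move=> H c0; rewrite /norm_inf; elim/big_ind: _ => //.
by move=> x y hx hy; rewrite ge_max hx hy.
Qed.
Lemma norm_inf_lb N (A : 'M[R]_N) i : \sum_j `|A i j| <= norm_inf A.
Proof. by rewrite /norm_inf [X in _ <= X](bigD1 i) //= le_max lexx. Qed.
End Norm.

Section Bounds.
Variable R : realType.
Variables (N : nat) (L : 'M[R]_N).
Hypothesis Lsym : L^T = L.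
Hypothesis N_gt0 : (0 < N)%N.
Local Notation r := (r L).
Local Notation w := (w L).
Variable m0 : 'I_N.
Hypothesis rm0 : r m0 = 0.
Hypothesis wm0 : forall i j, w m0 i j = N%:R^-1.

Definition F (g t : R) : 'M[R]_N := expR (g * t) *: (expm (- (t *: L)) - avg_mx R N).

Lemma F_entry g t i j :
  F g t i j = expR (g * t) * \sum_(m | m != m0) w m i j * expR (- t * r m).
Proof.
rewrite /F expm_mx // !mxE (bigD1 m0) //= rm0 mulr0 expR0 mulr1 wm0.
by rewrite [N%:R^-1 + _]addrC addrK.
Qed.

Lemma F_abs_ub g t lam i j : (forall m, m != m0 -> lam <= r m) -> g <= lam -> 0 <= t ->
  `|F g t i j| <= \sum_(m | m != m0) (w m i i + w m j j) / 2.
Proof.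
move=> Hr glam t0; rewrite F_entry normrM ger0_norm ?expR_ge0 //.
have H := ler_norm_sum (index_enum 'I_N) (fun m => w m i j * expR (- t * r m)) (fun m => m != m0).
have H3 : expR (g * t) * `|\sum_(m | m != m0) w m i j * expR (- t * r m)| <=
    expR (g * t) * \sum_(m | m != m0) `|w m i j * expR (- t * r m)|.
  by rewrite ler_wpM2l ?expR_ge0.
suff H4 : expR (g * t) * \sum_(m | m != m0) `|w m i j * expR (- t * r m)| <=
  \sum_(m | m != m0) (w m i i + w m j j) / 2 by exact: le_trans H3 H4.
rewrite mulr_sumr; apply: ler_sum => m mm0.
rewrite normrM (ger0_norm (expR_ge0 _)) mulrCA -expRD.
apply: le_trans _ (w_le L m i j).
rewrite -[X in _ <= X]mulr1 ler_wpM2l // expR_le1.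
have := Hr m mm0; nra.
Qed.

Lemma sum_not (k : 'I_N) (f : 'I_N -> R) : \sum_(m | m != k) f m = \sum_m f m - f k.
Proof. by rewrite [\sum_m f m](bigD1 k) //= addrC addrK. Qed.
Lemma sum_not_m0 (f : 'I_N -> R) : \sum_(m | m != m0) f m = \sum_m f m - f m0.
Proof. exact: sum_not. Qed.

Lemma F_row_ub g t lam i : (forall m, m != m0 -> lam <= r m) -> g <= lam -> 0 <= t ->
  \sum_j `|F g t i j| <= N%:R - 1.
Proof.
move=> Hr glam t0.
apply: le_trans (ler_sum _ (fun j _ => F_abs_ub i j Hr glam t0)) _.
rewrite exchange_big /=.
under eq_bigr => m _ do rewrite -mulr_suml big_split /= sumr_const card_ord w_row //.
rewrite -mulr_suml big_split /= sum_not_m0.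
rewrite sumrMnl w_sum eqxx wm0 sum_not_m0 sumr_const card_ord.
have n0 : (N%:R : R) != 0 by rewrite pnatr_eq0 -lt0n.
rewrite /= mulr1n -[N%:R^-1 *+ N]mulr_natr mulVf //; lra.
Qed.

Lemma F0_entry g i j : F g 0 i j = (i == j)%:R - N%:R^-1.
Proof.
rewrite /F expm_mx // !mxE mulr0 expR0 mul1r.
under eq_bigr do rewrite oppr0 mul0r expR0 mulr1.
by rewrite w_sum.
Qed.

Lemma F0_row g i : \sum_j `|F g 0 i j| = 2 - 2 / N%:R.
Proof.
rewrite (bigD1 i) //= F0_entry eqxx.
under eq_bigr => j ji do rewrite F0_entry eq_sym (negbTE ji) sub0r normrN.
rewrite sum_not sumr_const card_ord.
have h : N%:R^-1 <= (1 : R) by rewrite invf_le1 ?ltr0n // ler1n.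
have h0 : 0 <= (N%:R^-1 : R) by rewrite invr_ge0 ler0n.
rewrite /= mulr1n (ger0_norm h0) -[N%:R^-1 *+ N]mulr_natr mulVf; last by rewrite pnatr_eq0 -lt0n.
rewrite ger0_norm ?subr_ge0 //; lra.
Qed.
End Bounds.

Section SeqFacts.
Variable R : realType.
Lemma seq_struct (s : seq R) lam : sorted <=%R s -> nth 0 s 1 = lam -> 0 < lam ->
  (0 : R) \in s -> (1 < size s)%N ->
  count_mem (0 : R) s = 1%N /\ forall a, a \in s -> a = 0 \/ lam <= a.
Proof.
case: s => [|x0 [|x1 rest]] //= Hs Hn lam0 Hin _.
have /andP [h01 Hp] := Hs.
have Hall : all (fun y => x1 <= y) rest.
  exact: (order_path_min (@le_trans _ R) Hp).
have Hge a : a \in x1 :: rest -> lam <= a.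
  rewrite inE => /orP [/eqP -> | /(allP Hall)]; by rewrite -Hn.
have x00 : x0 = 0.
  move: Hin; rewrite inE => /orP [/eqP -> //|] /Hge; rewrite leNgt lam0 //.
have n0 : (0 : R) \notin x1 :: rest.
  by apply/negP => /Hge; rewrite leNgt lam0.
split.
  have c0 : count_mem (0:R) (x1 :: rest) = 0%N by apply/count_memPn.
  by move: c0 => /= ->; rewrite x00 eqxx.
move=> a; rewrite inE => /orP [/eqP ->|/Hge]; [left | right] => //.
Qed.

Lemma sum_count (t : seq R) : \sum_(x <- t) ((x == 0)%:R : R) = (count_mem (0 : R) t)%:R.
Proof.
elim: t => [|x t IH]; first by rewrite big_nil.
by rewrite big_cons IH /= natrD eq_sym.
Qed.

Lemma uniq_from_sum N (f : 'I_N -> R) :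
  \sum_m ((f m == 0)%:R : R) = 1 -> forall m m', f m = 0 -> f m' = 0 -> m = m'.
Proof.
move=> H m m' hm hm'; apply/eqP/negPn/negP => mm'.
have : 2 <= \sum_m ((f m == 0)%:R : R).
  rewrite (bigD1 m) //= (bigD1 m') 1?eq_sym //= hm hm' eqxx.
  rewrite -[2]addr0 addrA lerD2l sumr_ge0 // => k _; exact: ler0n.
by rewrite H => h; lra.
Qed.
End SeqFacts.

Section PartA.
Variable R : realType.
Variables (N : nat) (L : 'M[R]_N).
Hypothesis Lsym : L^T = L.
Hypothesis Lrow : forall i, \sum_j L i j = 0.
Hypothesis N_ge2 : (2 <= N)%N.
Let N_gt0 : (0 < N)%N. Proof. exact: leq_trans N_ge2. Qed.
Local Notation r := (r L).
Local Notation w := (w L).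

Lemma Gamma_lb g : ((2 - 2 / N%:R)%:E <= Gamma_inf L g)%E.
Proof.
have i0 : 'I_N := Ordinal N_gt0.
apply: (@le_trans _ _ (norm_inf (F L g 0))%:E).
  by rewrite lee_fin -(F0_row Lsym N_gt0 g i0) norm_inf_lb.
apply: ereal_sup_ubound; exists 0 => //=.
Qed.

Lemma struct_a lam : is_lambda2 L lam -> 0 < lam ->
  exists m0, [/\ r m0 = 0, forall i j, w m0 i j = N%:R^-1 &
     forall m, m != m0 -> lam <= r m].
Proof.
move=> [s [Hsize Hsort Hchar Hnth]] lam0.
have Hperm : perm_eq s [seq r m | m <- index_enum 'I_N].
  apply: prod_XsubC_eq; rewrite -Hchar char_L // big_map //.
have [m1 rm1] := exists_zero Lsym Lrow N_gt0.
have in0 : (0 : R) \in s.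
  by rewrite (perm_mem Hperm); apply/mapP; exists m1 => //; rewrite mem_index_enum.
have Hs2 : (1 < size s)%N by rewrite Hsize.
have [c1 Hmem] := seq_struct Hsort Hnth lam0 in0 Hs2.
have Z1 : \sum_m ((r m == 0)%:R : R) = 1.
  rewrite -(big_map r xpredT (fun x => ((x == 0)%:R : R))) sum_count.
  by rewrite -(permP Hperm) c1.
have Huniq := uniq_from_sum Z1.
have [m0 [rm0 wm0]] := kernel_w Lsym Lrow N_gt0 Huniq.
exists m0; split => // m mm0.
have : r m \in s by rewrite (perm_mem Hperm); apply: map_f; rewrite mem_index_enum.
move=> /Hmem [rm|//].
by move/eqP: mm0; case; apply: Huniq.
Qed.

Lemma Gamma_ub lam g : is_lambda2 L lam -> 0 < g -> g <= lam ->
  (Gamma_inf L g <= (N%:R - 1)%:E)%E.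
Proof.
move=> H g0 glam.
have [m0 [rm0 wm0 Hr]] := struct_a H (lt_le_trans g0 glam).
apply: ge_ereal_sup => _ [t t0 <-]; rewrite lee_fin.
apply: norm_inf_ub => [i|].
  exact: (F_row_ub Lsym N_gt0 rm0 wm0 i Hr glam t0).
by rewrite subr_ge0 ler1n.
Qed.
End PartA.

Section Lap.
Local Open Scope classical_set_scope.
Variable R : realType.
Variables (N : nat) (e : rel 'I_N).
Hypothesis He : simple_graph e.

Lemma lap_sym : (laplacian R e)^T = laplacian R e.
Proof.
case: He => esym _; apply/matrixP => i j; rewrite !mxE eq_sym esym.
by case: eqP => // ->.
Qed.

Lemma lap_row i : \sum_j laplacian R e i j = 0.
Proof.
case: He => _ eirr.
rewrite (bigD1 i) //= mxE eqxx.
under eq_bigr => j ji do rewrite mxE eq_sym (negbTE ji).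
rewrite sumrN.
have -> : \sum_(j | j != i) ((e i j)%:R : R) = \sum_j (e i j)%:R.
  by rewrite [in RHS](bigD1 i) //= (negbTE (eirr i)) add0r.
rewrite -natr_sum.
have -> : (\sum_j e i j)%N = #|[set k | e i k]|.
  rewrite -sum1_card [RHS]big_mkcond /=; apply: eq_bigr => j _.
  by rewrite unfold_in /in_set /= asboolb; case: (e i j).
by rewrite subrr.
Qed.

Hypothesis Hc : complete_graph e.
Hypothesis N_gt0 : (0 < N)%N.

Lemma deg_complete i : #|[set k | e i k]| = N.-1.
Proof.
rewrite -[N in RHS]card_ord -(cardC1 i); apply: eq_card => k.
rewrite unfold_in /in_set /= asboolb !inE.
case: He => esym eirr.
case: (eqVneq k i) => [->|ki]; first by rewrite (negbTE (eirr i)).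
by rewrite (Hc (i:=i) (j:=k)) 1?eq_sym.
Qed.

Lemma lap_complete : laplacian R e = N%:R%:M - const_mx 1.
Proof.
apply/matrixP => i j; rewrite !mxE deg_complete.
case: (eqVneq i j) => [ij|ij].
  subst j; rewrite (_ : N%:R *+ true = N%:R) // -[N in RHS](prednK N_gt0) mulrS; ring.
by rewrite (Hc ij) (_ : N%:R *+ false = 0) // sub0r.
Qed.
End Lap.

Section Complete.
Local Open Scope sesquilinear_scope.
Variable R : realType.
Local Notation toC := (real_complex R).
Variables (N : nat) (L : 'M[R]_N).
Hypothesis Lsym : L^T = L.
Hypothesis Lrow : forall i, \sum_j L i j = 0.
Hypothesis N_ge2 : (2 <= N)%N.
Let N_gt0 : (0 < N)%N. Proof. exact: leq_trans N_ge2. Qed.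
Hypothesis HL : L = N%:R%:M - const_mx 1.
Local Notation r := (r L).
Local Notation w := (w L).
Local Notation P := (P L).
Local Notation dd := (dd L).

Lemma JJ : (const_mx 1 : 'M[R]_N) *m (const_mx 1 : 'M[R]_N) = N%:R *: const_mx 1.
Proof.
apply/matrixP => i j; rewrite !mxE.
under eq_bigr do rewrite !mxE mulr1.
by rewrite sumr_const card_ord mulr1.
Qed.

Lemma L2 : L *m L = N%:R *: L.
Proof.
rewrite HL mulmxBl !mulmxBr mul_scalar_mx mul_mx_scalar JJ.
by rewrite scalerBr scale_scalar_mx subrr subr0 mul_scalar_mx.
Qed.

Lemma conj_cancel (A B : 'M[R[i]]_N) : P^t* *m A *m P = P^t* *m B *m P -> A = B.
Proof.
move=> /(congr1 (fun X => P *m X *m P^t*)) /=.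
by rewrite !mulmxA (PPt L) !mul1mx !(mulmxtVK _ (P_unitary L)).
Qed.

Lemma r_vals m : r m = 0 \/ r m = N%:R.
Proof.
have E : Lc L ^+ 2 = toC N%:R *: Lc L.
  rewrite /Lc -rmorphXn expr2 -mulmxE L2.
  by apply/matrixP => i j; rewrite !mxE rmorphM.
rewrite Lc_pow // [in RHS](Lc_eq Lsym) scalemxAl scalemxAr in E.
move/conj_cancel/matrixP/(_ m m): E; rewrite !mxE eqxx !mulr1n ddE // -rmorphXn -rmorphM.
move/complexI => /eqP; rewrite expr2 -subr_eq0 -mulrBl mulf_eq0 subr_eq0.
by case/orP => /eqP; [right|left].
Qed.

Lemma trace_r : \sum_m r m = N%:R * N%:R - N%:R.
Proof.
have E1 : \tr L = N%:R * N%:R - N%:R.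
  rewrite HL raddfB /= mxtrace_scalar /mxtrace.
  under eq_bigr do rewrite mxE.
  by rewrite sumr_const card_ord -[N%:R *+ N]mulr_natr.
have E2 : toC (\tr L) = \tr (Lc L) by rewrite /Lc trace_map_mx.
rewrite (Lc_eq Lsym) mxtrace_mulC mulmxA (PPt L) mul1mx mxtrace_diag in E2.
apply: (@complexI R); rewrite -E1 E2 rmorph_sum.
by apply: eq_bigr => m _; rewrite ddE.
Qed.

Lemma Z1 : \sum_m ((r m == 0)%:R : R) = 1.
Proof.
have n0 : (N%:R : R) != 0 by rewrite pnatr_eq0 -lt0n.
have E : \sum_m r m = \sum_m (N%:R - N%:R * (r m == 0)%:R).
  apply: eq_bigr => m _; case: (r_vals m) => ->.
    by rewrite eqxx mulr1 subrr.
  by rewrite pnatr_eq0 (negbTE (lt0n_neq0 N_gt0)) mulr0 subr0.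
rewrite trace_r sumrB sumr_const card_ord -mulr_sumr in E.
apply: (mulfI n0); rewrite mulr1.
move: E; rewrite -[N%:R *+ N]mulr_natr => E; lra.
Qed.

Lemma struct_c : exists m0, [/\ r m0 = 0, forall i j, w m0 i j = N%:R^-1 &
     forall m, m != m0 -> r m = N%:R].
Proof.
have Huniq := uniq_from_sum Z1.
have [m0 [rm0 wm0]] := kernel_w Lsym Lrow N_gt0 Huniq.
exists m0; split => // m mm0.
case: (r_vals m) => // rm.
by move/eqP: mm0; case; apply: Huniq.
Qed.

Lemma prod_nseq (F : R -> {poly R}) n x : \prod_(a <- nseq n x) F a = F x ^+ n.
Proof. by elim: n => [|n IH]; rewrite ?big_nil ?expr0 // big_cons IH exprS. Qed.

Lemma path_nseq n (x : R) : path <=%R x (nseq n x).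
Proof. by elim: n => //= n ->; rewrite lexx. Qed.

Lemma lambda2_c : is_lambda2 L N%:R.
Proof.
exists (0 :: nseq N.-1 N%:R); split.
- by rewrite /= size_nseq prednK.
- by rewrite /=; case: (N.-1) => [|n] //=; rewrite ler0n path_nseq.
- rewrite char_L // big_cons prod_nseq.
  have [m0 [rm0 wm0 Hr]] := struct_c.
  rewrite (bigD1 m0) //= rm0; congr (_ * _).
  rewrite (eq_bigr (fun=> 'X - (N%:R)%:P)); last by move=> m /Hr ->.
  by rewrite prodr_const cardC1 card_ord.
- by rewrite /= nth_nseq -ltnS prednK // N_ge2.
Qed.

Lemma Gamma_c g : 0 < g -> g <= N%:R -> Gamma_inf L g = (2 - 2 / N%:R)%:E.
Proof.
move=> g0 gN.
have hN : N%:R^-1 <= (1 : R) by rewrite invf_le1 ?ltr0n // ler1n.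
apply/eqP; rewrite eq_le; apply/andP; split; last exact: Gamma_lb.
apply: ge_ereal_sup => _ [t t0 <-]; rewrite lee_fin.
have [m0 [rm0 wm0 Hr]] := struct_c.
apply: (norm_inf_ub (A := F L g t)) => [i|]; last by lra.
have Fc j : F L g t i j = expR ((g - N%:R) * t) * F L g 0 i j.
  rewrite (F_entry Lsym rm0 wm0) (F0_entry Lsym).
  rewrite (eq_bigr (fun m => w m i j * expR (- t * N%:R))); last by move=> m /Hr ->.
  rewrite -big_distrl /= (sum_not_m0 m0) w_sum wm0 [_ * expR _]mulrC mulrA -expRD.
  by congr (expR _ * _); ring.
under eq_bigr do rewrite Fc normrM (ger0_norm (expR_ge0 _)).
rewrite -mulr_sumr F0_row //.
have t0' : 0 <= t := t0.
have e1 : expR ((g - N%:R) * t) <= 1 by rewrite expR_le1; nra.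
have : 0 <= 2 - 2 / N%:R :> R by lra.
nra.
Qed.
End Complete.

Unset Implicit Arguments.
Theorem proposition2 (R : realType) (N : nat) (e : rel 'I_N) :
  (2 <= N)%N -> simple_graph e -> connected_graph e ->
  (forall lam2 : R, is_lambda2 (laplacian R e) lam2 ->
     forall gamma : R, 0 < gamma -> gamma <= lam2 ->
       ((2 - 2 / N%:R)%:E <= Gamma_inf (laplacian R e) gamma)%E /\
       (Gamma_inf (laplacian R e) gamma <= (N%:R - 1)%:E)%E) /\
  (complete_graph e ->
     is_lambda2 (laplacian R e) N%:R /\
     forall gamma : R, 0 < gamma -> gamma <= N%:R ->
       Gamma_inf (laplacian R e) gamma = (2 - 2 / N%:R)%:E).
Proof.
move=> N2 Hs _.
have Lsym := lap_sym R Hs.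
have Lrow := lap_row R Hs.
have N_gt0 : (0 < N)%N by apply: leq_trans N2.
split.
  move=> lam H g g0 glam; split; first exact: Gamma_lb.
  exact: Gamma_ub H g0 glam.
move=> Hcomp.
have HL := lap_complete R Hs Hcomp N_gt0.
split; first exact: lambda2_c.
move=> g g0 gN; exact: Gamma_c.
Qed.
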